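(* Let $n\ge2$ and let $v_1,\dots,v_k$ and $u_1,\dots,u_k$ be two collections of $k\le n-1$ normalized vectors in $\mathbb C^n$ such that $\dim\mathrm{span}\{v_1,\dots,v_k\}\ge2$ and $\dim\mathrm{span}\{u_1,\dots,u_k\}\ge2$. Let $\mathcal V:=\{X\in M_n(\mathbb C):\ v_1^\ast Xu_1=\dots=v_k^\ast Xu_k=0\}$. Then $\mathcal V$ contains no rank-one matrix that is left-symmetric relative to $\mathcal V$.
   Context: $M_n(\mathbb C)$ carries the operator (spectral) norm. $A\perp B$ (Birkhoff–James orthogonality) means $\|A+\lambda B\|\ge\|A\|$ for all $\lambda\in\mathbb C$. For a subset $\mathcal S$, an element $A\in\mathcal S$ is left-symmetric relative to $\mathcal S$ if for every $B\in\mathcal S$, $A\perp B$ implies $B\perp A$. *)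

(* Defs.v *)
From HB Require Import structures.
From mathcomp Require Import all_boot all_order all_algebra.
From mathcomp Require Import classical_sets reals.
From mathcomp.real_closed Require Import complex.
Set Implicit Arguments. Unset Strict Implicit. Unset Printing Implicit Defensive.
Import Order.TTheory GRing.Theory Num.Theory.
Local Open Scope ring_scope.
Local Open Scope classical_set_scope.

Definition vnorm (R : realType) (n : nat) (x : 'cV[R[i]]_n) : R :=
  Num.sqrt (\sum_(j < n) ((complex.Re (x j 0)) ^+ 2 + (complex.Im (x j 0)) ^+ 2)).

Definition opnorm (R : realType) (n : nat) (A : 'M[R[i]]_n) : R :=
  sup [set vnorm (A *m x) | x in [set x : 'cV[R[i]]_n | vnorm x = 1]].

Definition BJ_orth (R : realType) (n : nat) (A B : 'M[R[i]]_n) : Prop :=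
  forall lambda : R[i], opnorm A <= opnorm (A + lambda *: B).

Definition left_symmetric_rel (R : realType) (n : nat)
    (S : set 'M[R[i]]_n) (A : 'M[R[i]]_n) : Prop :=
  S A /\ forall B, S B -> BJ_orth A B -> BJ_orth B A.

Definition sesq (R : realType) (n : nat) (v : 'cV[R[i]]_n) (X : 'M[R[i]]_n)
    (u : 'cV[R[i]]_n) : R[i] :=
  ((map_mx Num.conj v)^T *m X *m u) 0 0.

(* n x k matrix whose columns are the vectors w_1, ..., w_k;
   its rank is dim span {w_1, ..., w_k}. *)
Definition colmat (R : realType) (n k : nat) (w : 'I_k -> 'cV[R[i]]_n)
    : 'M[R[i]]_(n, k) := \matrix_(a < n, b < k) w b a 0.

Definition Vspace (R : realType) (n k : nat) (v u : 'I_k -> 'cV[R[i]]_n)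
    : set 'M[R[i]]_n := [set X | forall j : 'I_k, sesq (v j) X (u j) = 0].

(* Main.v *)
Require Import Defs.
From HB Require Import structures.
From mathcomp Require Import all_boot all_order all_algebra.
From mathcomp Require Import classical_sets reals.
From mathcomp.real_closed Require Import complex.
From mathcomp Require Import ring lra zify.
Import Order.TTheory GRing.Theory Num.Theory.
Local Open Scope ring_scope.
Section Basics.
Context {R : realType}.
Local Notation C := R[i].

Definition adjm {m n} (M : 'M[C]_(m,n)) : 'M[C]_(n,m) := (map_mx Num.conj M)^T.

Lemma adjmM {m n p} (A : 'M[C]_(m,n)) (B : 'M[C]_(n,p)) : adjm (A *m B) = adjm B *m adjm A.
Proof. by rewrite /adjm map_mxM trmx_mul. Qed.
Lemma adjmK {m n} (A : 'M[C]_(m,n)) : adjm (adjm A) = A.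
Proof. by apply/matrixP=> i j; rewrite !mxE conjCK. Qed.
Lemma adjmD {m n} (A B : 'M[C]_(m,n)) : adjm (A + B) = adjm A + adjm B.
Proof. by apply/matrixP=> i j; rewrite !mxE rmorphD. Qed.
Lemma adjmN {m n} (A : 'M[C]_(m,n)) : adjm (- A) = - adjm A.
Proof. by apply/matrixP=> i j; rewrite !mxE rmorphN. Qed.
Lemma adjmB {m n} (A B : 'M[C]_(m,n)) : adjm (A - B) = adjm A - adjm B.
Proof. by rewrite adjmD adjmN. Qed.
Lemma adjmZ {m n} a (A : 'M[C]_(m,n)) : adjm (a *: A) = a^* *: adjm A.
Proof. by apply/matrixP=> i j; rewrite !mxE rmorphM. Qed.
Lemma adjm1 n : adjm (1%:M : 'M[C]_n) = 1%:M.
Proof. by apply/matrixP=> i j; rewrite !mxE eq_sym; case: (_ == _); rewrite ?conjC1 ?conjC0. Qed.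

Definition dotc {n} (a b : 'cV[C]_n) : C := (adjm a *m b) 0 0.
Lemma dotcE {n} (a b : 'cV[C]_n) : dotc a b = \sum_i (a i 0)^* * b i 0.
Proof. by rewrite /dotc mxE; apply: eq_bigr => i _; rewrite !mxE. Qed.

Lemma vnorm_ge0 {n} (a : 'cV[C]_n) : 0 <= vnorm a.
Proof. exact: sqrtr_ge0. Qed.

Lemma vnormE {n} (a : 'cV[C]_n) : ((vnorm a)^+2)%:C%C = dotc a a.
Proof.
rewrite /vnorm sqr_sqrtr; last by apply: sumr_ge0 => i _; rewrite addr_ge0 // sqr_ge0.
rewrite dotcE rmorph_sum; apply: eq_bigr => i _ /=.
by rewrite -normCKC -add_Re2_Im2.
Qed.

Lemma dotc_ge0 {n} (a : 'cV[C]_n) : 0 <= dotc a a.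
Proof. by rewrite -vnormE ler0c sqr_ge0. Qed.

Lemma vnorm_le {n m} (a : 'cV[C]_n) (b : 'cV[C]_m) : dotc a a <= dotc b b -> vnorm a <= vnorm b.
Proof.
by rewrite -!vnormE lecR ler_sqr // nnegrE vnorm_ge0.
Qed.
Lemma vnorm_lt {n m} (a : 'cV[C]_n) (b : 'cV[C]_m) : dotc a a < dotc b b -> vnorm a < vnorm b.
Proof.
by rewrite -!vnormE ltcR ltr_sqr // nnegrE vnorm_ge0.
Qed.
Lemma vnorm1 {n} (a : 'cV[C]_n) : dotc a a = 1 -> vnorm a = 1.
Proof.
move=> h; have : ((vnorm a)^+2)%:C%C = (1^+2)%:C%C by rewrite vnormE h expr1n.
move/complexI/eqP; rewrite eqf_sqr => /orP[/eqP //|/eqP h2].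
by move: (vnorm_ge0 a); rewrite h2 ler0N1.
Qed.
Lemma dotc_eq0 {n} (a : 'cV[C]_n) : dotc a a = 0 -> a = 0.
Proof.
rewrite dotcE => /eqP; rewrite psumr_eq0 => [/allP H|i _]; last first.
  by rewrite mulrC mul_conjC_ge0.
apply/matrixP=> i j; rewrite (ord1 j) mxE.
have := H i (mem_index_enum i); rewrite mulrC mul_conjC_eq0.
by move/eqP.
Qed.
End Basics.
Section Norms.
Context {R : realType}.
Local Notation C := R[i].

Lemma dotc_mulmx {n m} (M : 'M[C]_(n,m)) a b : dotc (M *m a) b = dotc a (adjm M *m b).
Proof. by rewrite /dotc adjmM mulmxA. Qed.

Lemma isom_dotc {n m} (X : 'M[C]_(n,m)) (w : 'cV[C]_m) :
  adjm X *m X = 1%:M -> dotc (X *m w) (X *m w) = dotc w w.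
Proof. by move=> h; rewrite dotc_mulmx mulmxA h mul1mx. Qed.

Lemma contr_dotc {n m} (Z : 'M[C]_(n,m)) (h : 'cV[C]_n) :
  adjm Z *m Z = 1%:M -> dotc (adjm Z *m h) (adjm Z *m h) <= dotc h h.
Proof.
move=> hZ; set P := Z *m adjm Z.
have PP : P *m P = P by rewrite /P mulmxA -(mulmxA Z) hZ mulmx1.
have Pa : adjm P = P by rewrite /P adjmM adjmK.
have E : dotc h h = dotc (h - P *m h) (h - P *m h) + dotc (adjm Z *m h) (adjm Z *m h).
  rewrite /dotc; have -> : forall X Y : 'M[C]_1, X 0 0 + Y 0 0 = (X + Y) 0 0 by move=> X Y; rewrite mxE.
  congr (_ 0 0).
  rewrite adjmB adjmM Pa !adjmM adjmK mulmxBl !mulmxBr.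
  rewrite !mulmxA -(mulmxA _ (adjm Z) Z) hZ mulmx1 subrr subr0.
  by rewrite subrK.
by rewrite E lerDr dotc_ge0.
Qed.

Lemma dotc_bound {n} (M : 'M[C]_n) (h : 'cV[C]_n) : dotc h h = 1 ->
  dotc (M *m h) (M *m h) <= \sum_i (\sum_j `|M i j|) ^+ 2.
Proof.
move=> h1; rewrite dotcE; apply: ler_sum => i _.
have hj : forall j, `|h j 0| <= 1.
  move=> j; have : `|h j 0| ^+ 2 <= 1.
    rewrite -h1 dotcE (bigD1 j) //= normCKC lerDl.
    by apply: sumr_ge0 => l _; rewrite mulrC mul_conjC_ge0.
  by rewrite expr_le1.
rewrite -normCKC ler_sqr ?nnegrE ?sumr_ge0 //.
rewrite mxE; apply: le_trans (ler_norm_sum _ _ _) _; apply: ler_sum => j _.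
by rewrite normrM ler_piMr.
Qed.

Lemma opnorm_ub {n} (M : 'M[C]_n) c : (0 < n)%N ->
  (forall h, vnorm h = 1 -> vnorm (M *m h) <= c) -> opnorm M <= c.
Proof.
move=> n0 H; apply: ge_sup.
  exists (vnorm (M *m delta_mx (Ordinal n0) 0)); exists (delta_mx (Ordinal n0) 0) => //.
  apply: vnorm1; rewrite dotcE (bigD1 (Ordinal n0)) //= big1 ?mxE ?eqxx.
    by rewrite conjC1 mulr1 addr0.
  by move=> i /negbTE ne; rewrite !mxE ne mulr0.
by move=> _ [h h1 <-]; apply: H.
Qed.

Lemma opnorm_lb {n} (M : 'M[C]_n) h : vnorm h = 1 -> vnorm (M *m h) <= opnorm M.
Proof.
move=> h1; apply: ub_le_sup; last by exists h.
set K := \sum_i (\sum_j `|M i j|) ^+ 2.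
exists (1 + complex.Re K) => _ [g g1 <-].
have g1' : dotc g g = 1 by rewrite -vnormE g1 expr1n.
have := dotc_bound M _ g1'; rewrite -vnormE lecE => /andP[_ /= hle].
have := vnorm_ge0 (M *m g); move: hle; set x := vnorm _; set y := complex.Re _ => hle x0.
by nra.
Qed.
End Norms.
Section Two.
Context {R : realType}.
Local Notation C := R[i].

Definition cv2 (a b : C) : 'cV[C]_2 := \col_(i < 2) (if (i : nat) == 0%N then a else b).
Definition mx2 (a b c d : C) : 'M[C]_2 :=
  \matrix_(i < 2, j < 2) (if (i : nat) == 0%N then (if (j : nat) == 0%N then a else b)
                          else (if (j : nat) == 0%N then c else d)).

Lemma cv2_eta (g : 'cV[C]_2) : g = cv2 (g 0 0) (g 1 0).
Proof.
by apply/matrixP=> i j; rewrite (ord1 j) !mxE; case: i => [[|[|]]] //= ?; congr (g _ _); apply/val_inj.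
Qed.

Lemma mx2_cv2 a b c d x y : mx2 a b c d *m cv2 x y = cv2 (a * x + b * y) (c * x + d * y).
Proof.
by apply/matrixP=> i j; rewrite !mxE !big_ord_recl big_ord0 !mxE /=; case: i => [[|[|]]] //=; rewrite addr0.
Qed.

Lemma dotc_cv2 a b c d : dotc (cv2 a b) (cv2 c d) = a^* * c + b^* * d.
Proof. by rewrite dotcE !big_ord_recl big_ord0 !mxE /= addr0. Qed.

Lemma scale_cv2 k a b : k *: cv2 a b = cv2 (k * a) (k * b).
Proof. by apply/matrixP=> i j; rewrite !mxE; case: ifP. Qed.
Lemma add_cv2 a b c d : cv2 a b + cv2 c d = cv2 (a + c) (b + d).
Proof. by apply/matrixP=> i j; rewrite !mxE; case: ifP. Qed.
Lemma scale_mx2 k a b c d : k *: mx2 a b c d = mx2 (k * a) (k * b) (k * c) (k * d).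
Proof. by apply/matrixP=> i j; rewrite !mxE; case: ifP; case: ifP. Qed.
Lemma add_mx2 a b c d a' b' c' d' :
  mx2 a b c d + mx2 a' b' c' d' = mx2 (a + a') (b + b') (c + c') (d + d').
Proof. by apply/matrixP=> i j; rewrite !mxE; case: ifP; case: ifP. Qed.
Lemma opp_mx2 a b c d : - mx2 a b c d = mx2 (- a) (- b) (- c) (- d).
Proof. by apply/matrixP=> i j; rewrite !mxE; case: ifP; case: ifP. Qed.

Lemma dotcZl {n} k (a b : 'cV[C]_n) : dotc (k *: a) b = k^* * dotc a b.
Proof. by rewrite /dotc adjmZ -scalemxAl mxE. Qed.
Lemma dotcZr {n} k (a b : 'cV[C]_n) : dotc a (k *: b) = k * dotc a b.
Proof. by rewrite /dotc -scalemxAr mxE. Qed.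

Lemma vnorm_lec {n} (v : 'cV[C]_n) (c : R) : 0 <= c -> dotc v v <= (c ^+ 2)%:C%C -> vnorm v <= c.
Proof. by move=> c0; rewrite -vnormE lecR ler_sqr // nnegrE vnorm_ge0. Qed.
Lemma vnorm_gec {n} (v : 'cV[C]_n) (c : R) : 0 <= c -> (c ^+ 2)%:C%C <= dotc v v -> c <= vnorm v.
Proof. by move=> c0; rewrite -vnormE lecR ler_sqr // nnegrE vnorm_ge0. Qed.

Lemma vnorm_gtc {n} (v : 'cV[C]_n) (c : R) : 0 <= c -> (c ^+ 2)%:C%C < dotc v v -> c < vnorm v.
Proof. by move=> c0; rewrite -vnormE ltcR ltr_sqr // nnegrE vnorm_ge0. Qed.

Lemma conj_realc (c : R) : (c%:C%C)^* = c%:C%C.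
Proof. by rewrite conj_Creal // complex_real. Qed.
End Two.
Section Core.
Context {R : realType}.
Local Notation C := R[i].

Lemma sesqB {n} (v u : 'cV[C]_n) X Y k : sesq v (X - k *: Y) u = sesq v X u - k * sesq v Y u.
Proof. by rewrite /sesq mulmxBr mulmxBl -scalemxAr -scalemxAl !mxE. Qed.

Lemma Vspace_comb {n k} (v u : 'I_k -> 'cV[C]_n) X Y c :
  Vspace v u X -> Vspace v u Y -> Vspace v u (X - c *: Y).
Proof. by move=> hX hY j; rewrite sesqB hX hY mulr0 subr0. Qed.

Lemma core {n k} (v u : 'I_k -> 'cV[C]_n) (X0 Z0 : 'M[C]_(n,2)) (kap : R) (al om : C) :
  (0 < n)%N -> adjm X0 *m X0 = 1%:M -> adjm Z0 *m Z0 = 1%:M ->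
  0 < kap -> 0 < om -> al != 0 -> al * al^* + om ^+ 2 = 1 ->
  Vspace v u (kap%:C%C *: (X0 *m mx2 1 0 0 0 *m adjm Z0)) ->
  Vspace v u (X0 *m mx2 (al^*) om om (- al) *m adjm Z0) ->
  ~ left_symmetric_rel (Vspace v u) (kap%:C%C *: (X0 *m mx2 1 0 0 0 *m adjm Z0)).
Proof.
move=> n0 hX hZ k0 om0 al0 hal VA VC [_ LS].
have omc : om^* = om by rewrite geC0_conj // ltW.
have kc : (kap%:C%C)^* = kap%:C%C by rewrite conj_realc.
have kap0 : kap%:C%C != 0.
  by apply/eqP => /(congr1 (@complex.Re R)) /= /eqP; rewrite gt_eqF.
have kapp : 0 < kap%:C%C by rewrite ltcR.
set E := mx2 1 0 0 0 in VA LS *.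
set U := mx2 (al^*) om om (- al) in VC *.
set A := kap%:C%C *: _ in VA LS *.
set M := mx2 0 om om (- al).
set B := X0 *m M *m adjm Z0.
have BE : B = X0 *m U *m adjm Z0 - (al^* / kap%:C%C) *: A.
  rewrite /A scalerA divfK // scalemxAl -mulmxBl scalemxAr -mulmxBr /B; congr (_ *m _ *m _).
  by rewrite /U /E scale_mx2 opp_mx2 add_mx2 !mulr0 !oppr0 !addr0 mulr1 subrr.
have VB : Vspace v u B by rewrite BE; apply: Vspace_comb.
have Zunit : forall w, dotc w w = 1 -> vnorm (Z0 *m w) = 1.
  by move=> w hw; apply: vnorm1; rewrite isom_dotc.
have dot1 : forall h : 'cV[C]_n, vnorm h = 1 -> dotc h h = 1.
  by move=> h h1; rewrite -vnormE h1 expr1n.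
have BA : BJ_orth A B.
  move=> mu.
  have hA : opnorm A <= kap.
    apply: opnorm_ub => // h h1; apply: vnorm_lec; first exact: ltW.
    rewrite /A -!scalemxAl -!mulmxA.
    set g := adjm Z0 *m h.
    have hg : dotc g g <= 1 by rewrite -(dot1 h h1) contr_dotc.
    rewrite dotcZl dotcZr isom_dotc //.
    move: hg; rewrite (cv2_eta g) mx2_cv2 !dotc_cv2 => hg.
    rewrite ?(mulr1, mulr0, addr0, add0r, mul0r, mul1r, rmorph0) kc mulrA -rmorphM -expr2.
    have k2 : 0 <= (kap ^+ 2)%:C%C by rewrite ler0c sqr_ge0.
    rewrite -[X in _ <= X]mulr1; apply: ler_wpM2l => //.
    by apply: le_trans hg; rewrite lerDl mulrC mul_conjC_ge0.
  have hAB : kap <= vnorm ((A + mu *: B) *m (Z0 *m cv2 1 0)).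
    apply: vnorm_gec; first exact: ltW.
    have -> : (A + mu *: B) *m (Z0 *m cv2 1 0) =
       X0 *m (kap%:C%C *: (E *m cv2 1 0) + mu *: (M *m cv2 1 0)).
      rewrite mulmxDl /A /B -!scalemxAl !mulmxA -!(mulmxA _ (adjm Z0) Z0) hZ !mulmx1.
      by rewrite mulmxDr -!scalemxAr !mulmxA.
    rewrite isom_dotc // !mx2_cv2 !scale_cv2 add_cv2 dotc_cv2.
    rewrite ?(mulr1, mulr0, addr0, add0r, mul0r, mul1r).
    rewrite kc -expr2 -rmorphXn lerDl mulrC; exact: mul_conjC_ge0.
  apply: (le_trans hA); apply: (le_trans hAB); apply: opnorm_lb.
  by apply: Zunit; rewrite dotc_cv2 conjC1 conjC0 !mulr1 mulr0 addr0.
have := LS B VB BA (al^* / kap%:C%C).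
have -> : B + al^* / kap%:C%C *: A = X0 *m U *m adjm Z0 by rewrite BE subrK.
have hC : opnorm (X0 *m U *m adjm Z0) <= 1.
  apply: opnorm_ub => // h h1; apply: vnorm_lec => //.
  rewrite expr1n rmorph1 -!mulmxA (isom_dotc X0) // -(dot1 h h1).
  set g := adjm Z0 *m h.
  have -> : dotc (U *m g) (U *m g) = dotc g g.
    rewrite (cv2_eta g) /U mx2_cv2 !dotc_cv2 !rmorphD !rmorphM !rmorphN /= conjCK omc.
    rewrite -[X in _ = X]mul1r -{1}hal; ring.
  by rewrite contr_dotc.
have hB : 1 < vnorm (B *m (Z0 *m cv2 om (- al^*))).
  apply: vnorm_gtc => //; rewrite expr1n rmorph1.
  rewrite /B -!mulmxA (mulmxA (adjm Z0)) hZ mul1mx isom_dotc // /M mx2_cv2 dotc_cv2.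
  rewrite ?(mulr1, mulr0, addr0, add0r, mul0r, mul1r).
  have -> : (om * - al^* ) ^* * (om * - al^* ) + (om * om + - al * - al^*) ^* * (om * om + - al * - al^*)
     = 1 + om ^+ 2 * (al * al^*).
    rewrite !rmorphD !rmorphM !rmorphN /= conjCK omc.
    rewrite -[1]mulr1 -{1 2}hal; ring.
  rewrite ltrDl mulr_gt0 ?exprn_gt0 //.
  by rewrite lt_def mul_conjC_ge0 mul_conjC_eq0 al0.
move=> hle.
have : 1 < 1 :> R.
  apply: (lt_le_trans hB); apply: le_trans hC; apply: le_trans hle.
  apply: opnorm_lb; apply: Zunit.
  rewrite dotc_cv2 rmorphN /= conjCK omc mulrNN -expr2 addrC; exact: hal.
by rewrite ltxx.
Qed.
End Core.
Section Vec.
Context {R : realType}.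
Local Notation C := R[i].

Lemma dotcC {n} (a b : 'cV[C]_n) : dotc b a = (dotc a b)^*.
Proof. by rewrite !dotcE rmorph_sum; apply: eq_bigr => i _; rewrite rmorphM /= conjCK mulrC. Qed.

Lemma dotcDr {n} (a b c : 'cV[C]_n) : dotc a (b + c) = dotc a b + dotc a c.
Proof. by rewrite /dotc mulmxDr mxE. Qed.
Lemma dotcDl {n} (a b c : 'cV[C]_n) : dotc (a + b) c = dotc a c + dotc b c.
Proof. by rewrite /dotc adjmD mulmxDl mxE. Qed.
Lemma dotcNr {n} (a b : 'cV[C]_n) : dotc a (- b) = - dotc a b.
Proof. by rewrite /dotc mulmxN mxE. Qed.
Lemma dotcNl {n} (a b : 'cV[C]_n) : dotc (- a) b = - dotc a b.
Proof. by rewrite /dotc adjmN mulNmx mxE. Qed.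
Lemma dotcBr {n} (a b c : 'cV[C]_n) : dotc a (b - c) = dotc a b - dotc a c.
Proof. by rewrite dotcDr dotcNr. Qed.
Lemma dotcBl {n} (a b c : 'cV[C]_n) : dotc (a - b) c = dotc a c - dotc b c.
Proof. by rewrite dotcDl dotcNl. Qed.

Lemma sesqE {n} (v u : 'cV[C]_n) X : sesq v X u = dotc v (X *m u).
Proof. by rewrite /sesq /dotc mulmxA. Qed.

Definition mk2 {n} (x r : 'cV[C]_n) : 'M[C]_(n, 2) :=
  \matrix_(i < n, j < 2) (if (j : nat) == 0%N then x i 0 else r i 0).

Lemma mk2_cv2 {n} (x r : 'cV[C]_n) a b : mk2 x r *m cv2 a b = a *: x + b *: r.
Proof.
apply/matrixP=> i j; rewrite (ord1 j) !mxE !big_ord_recl big_ord0 !mxE /=.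
by rewrite addr0 mulrC (mulrC b).
Qed.

Lemma adj_mk2 {n} (y s u : 'cV[C]_n) : adjm (mk2 y s) *m u = cv2 (dotc y u) (dotc s u).
Proof.
apply/matrixP=> i j; rewrite (ord1 j) !mxE !dotcE.
by case: i => [[|[|]]] //= ?; apply: eq_bigr => l _; rewrite !mxE.
Qed.

Lemma mk2_iso {n} (x r : 'cV[C]_n) : dotc x x = 1 -> dotc r r = 1 -> dotc x r = 0 ->
  adjm (mk2 x r) *m mk2 x r = 1%:M.
Proof.
move=> hx hr hxr; apply/matrixP=> i j.
have -> : adjm (mk2 x r) *m mk2 x r = \matrix_(i < 2, j < 2)
   (if (i : nat) == 0%N then (if (j : nat) == 0%N then dotc x x else dotc x r)
    else (if (j : nat) == 0%N then dotc r x else dotc r r)).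
  apply/matrixP=> a b; rewrite !mxE !dotcE.
  by case: a => [[|[|]]] //= ?; case: b => [[|[|]]] //= ?; apply: eq_bigr => l _; rewrite !mxE.
rewrite !mxE (dotcC x r) hxr hx hr conjC0.
by case: i => [[|[|]]] //= ?; case: j => [[|[|]]] //= ?.
Qed.

Lemma mk2_E {n} (x r y s : 'cV[C]_n) :
  mk2 x r *m mx2 1 0 0 0 *m adjm (mk2 y s) = x *m adjm y.
Proof.
apply/matrixP=> i j; rewrite !mxE !big_ord_recl !big_ord0 !mxE /=.
by rewrite !big_ord_recl !big_ord0 !mxE /= ?(mulr1, mulr0, addr0, mul0r, add0r).
Qed.

Lemma sesq_mk2 {n} (v u x r y s : 'cV[C]_n) a b c d :
  sesq v (mk2 x r *m mx2 a b c d *m adjm (mk2 y s)) u =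
  dotc v x * (a * dotc y u + b * dotc s u) + dotc v r * (c * dotc y u + d * dotc s u).
Proof.
rewrite sesqE -!mulmxA adj_mk2 mx2_cv2 mk2_cv2 dotcDr !dotcZr ; ring.
Qed.
End Vec.
Section Exist.
Context {R : realType}.
Local Notation C := R[i].

Lemma normalize {n} (a : 'cV[C]_n) : a != 0 ->
  0 < vnorm a /\ dotc ((vnorm a)^-1%:C%C *: a) ((vnorm a)^-1%:C%C *: a) = 1.
Proof.
move=> a0.
have hpos : 0 < vnorm a.
  rewrite lt_def vnorm_ge0 andbT; apply/eqP => h0.
  by move: a0; rewrite (dotc_eq0 a) ?eqxx // -vnormE h0 expr0n.
split=> //; rewrite dotcZl dotcZr conj_realc -vnormE mulrA -!rmorphM.
by rewrite -expr2 -exprMn mulVf ?gt_eqF // expr1n.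
Qed.

Lemma kernel_vec {n} (T : finType) (f : T -> 'cV[C]_n) : (#|T| < n)%N ->
  exists r : 'cV[C]_n, dotc r r = 1 /\ forall t, dotc (f t) r = 0.
Proof.
move=> Tn.
pose W : 'M[C]_(#|T|, n) := \matrix_(i, c) ((f (enum_val i)) c 0)^*.
set K := kermx W^T.
have rK : (0 < \rank K)%N.
  rewrite /K mxrank_ker; have := rank_leq_col W^T; move: Tn.
  by move: (\rank _) => m; lia.
have [i Hi] : exists i, row i K != 0.
  case: (pickP (fun i => row i K != 0)) => [i Hi|H]; first by exists i.
  have K0 : K = 0 by apply/row_matrixP => i; rewrite row0; move: (H i) => /negbFE/eqP.
  by move: rK; rewrite K0 mxrank0.
set r0 := (row i K)^T.
have r00 : r0 != 0 by rewrite /r0 trmx_eq0.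
have Wr : W *m r0 = 0.
  apply: trmx_inj; rewrite trmx_mul /r0 !trmxK trmx0.
  by rewrite -row_mul mulmx_ker row0.
have [_ h1] := @normalize _ r0 r00.
eexists; split; first exact: h1.
move=> t; rewrite dotcZr; apply/eqP; rewrite mulf_eq0; apply/orP; right; apply/eqP.
have := congr1 (fun M : 'M[C]_(#|T|, 1) => M (enum_rank t) 0) Wr; rewrite !mxE => <-.
rewrite dotcE; apply: eq_bigr => c _; rewrite !mxE enum_rankK.
done.
Qed.

Lemma gs_aux1 {n} (y w : 'cV[C]_n) al : dotc y y = 1 -> dotc y w = 0 ->
  dotc (w + al *: y) (w + al *: y) = dotc w w + al^* * al.
Proof.
move=> y1 yw; rewrite !dotcDl !dotcDr !dotcZl !dotcZr (dotcC y w) yw y1 conjC0.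
by rewrite !mulr0 mulr1 addr0 add0r.
Qed.
Lemma gs_aux2 {n} (y w : 'cV[C]_n) al : dotc y w = 0 ->
  dotc w (w + al *: y) = dotc w w.
Proof. by move=> yw; rewrite dotcDr dotcZr (dotcC y w) yw conjC0 mulr0 addr0. Qed.
Lemma gs_aux3 {n} (y w : 'cV[C]_n) al : dotc y y = 1 -> dotc y w = 0 ->
  dotc y (w + al *: y) = al.
Proof. by move=> y1 yw; rewrite dotcDr dotcZr yw y1 mulr1 add0r. Qed.

Lemma gram_schmidt {n} (y u : 'cV[C]_n) : dotc y y = 1 -> dotc u u = 1 ->
  u != dotc y u *: y ->
  exists s om, [/\ dotc y s = 0, dotc s s = 1, 0 < om, dotc s u = om &
                   dotc y u * (dotc y u)^* + om ^+ 2 = 1].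
Proof.
move=> y1 u1 uy.
have [w [uE yw w0]] : exists w, [/\ u = w + dotc y u *: y, dotc y w = 0 & w != 0].
  exists (u - dotc y u *: y); split; first by rewrite subrK.
    by rewrite dotcBr dotcZr y1 mulr1 subrr.
  by rewrite subr_eq0.
move: u1 uy; rewrite uE gs_aux3 //; move: (dotc y u) => al u1 _.
have [cpos h1] := @normalize _ w w0.
rewrite gs_aux1 // -vnormE in u1.
exists ((vnorm w)^-1%:C%C *: w), ((vnorm w)%:C%C); split => //.
- by rewrite dotcZr yw mulr0.
- by rewrite ltcE /= eqxx cpos.
- rewrite dotcZl conj_realc gs_aux2 // -vnormE -rmorphM; congr (_%:C%C).
  by rewrite expr2 mulrA mulVf ?gt_eqF // mul1r.
- by rewrite -rmorphXn mulrC addrC.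
Qed.
Lemma rank1_decomp {n} (A : 'M[C]_n) : \rank A = 1%N ->
  exists x y : 'cV[C]_n, exists kap : R,
    [/\ dotc x x = 1, dotc y y = 1, 0 < kap & A = kap%:C%C *: (x *m adjm y)].
Proof.
move=> rA.
pose e : 'cV[C]_n := \col_i ((i : nat) == 0%N)%:R.
have pid1 : pid_mx 1 = e *m e^T :> 'M[C]_n.
  apply/matrixP=> i j; rewrite !mxE big_ord1 !mxE.
  by case: i => [[|i] Hi]; case: j => [[|j] Hj]; rewrite /= ?mulr1 ?mul1r ?mulr0 ?mul0r ?andbF ?mulr0n.
set x0 := col_ebase A *m e.
set y0 := adjm (e^T *m row_ebase A).
have AE : A = x0 *m adjm y0.
  have E := mulmx_ebase A; rewrite rA pid1 in E.
  by apply/esym; rewrite -[RHS]E /x0 /y0 adjmK !mulmxA.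
have A0 : A != 0 by rewrite -mxrank_eq0 rA.
have x00 : x0 != 0 by apply: contraNneq A0 => h; rewrite AE h mul0mx.
have y00 : y0 != 0.
  apply: contraNneq A0 => h; rewrite AE h.
  have -> : adjm (0 : 'cV[C]_n) = 0 by apply/matrixP=> i j; rewrite !mxE rmorph0.
  by rewrite mulmx0.
have [xp x1] := @normalize _ x0 x00; have [yp y1] := @normalize _ y0 y00.
eexists; eexists; exists (vnorm x0 * vnorm y0); split; [exact: x1|exact: y1| by rewrite mulr_gt0 |].
rewrite adjmZ conj_realc -scalemxAr -scalemxAl scalerA -!rmorphM.
rewrite scalerA -rmorphM.
have -> : vnorm x0 * vnorm y0 * ((vnorm y0)^-1 / vnorm x0) = 1.
  by field; rewrite !gt_eqF.
by rewrite rmorph1 scale1r.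
Qed.
End Exist.
Section Cases.
Context {R : realType}.
Local Notation C := R[i].

Lemma rank_not_parallel {n k} (w : 'I_k -> 'cV[C]_n) (y : 'cV[C]_n) :
  (2 <= \rank (colmat w))%N -> exists j, w j != dotc y (w j) *: y.
Proof.
move=> rw; case: (pickP (fun j => w j != dotc y (w j) *: y)) => [j H|H]; first by exists j.
have E : colmat w = y *m \row_j (dotc y (w j)).
  apply/matrixP => a b; rewrite !mxE big_ord1 !mxE.
  by move: (H b) => /negbFE/eqP {1}->; rewrite mxE mulrC.
move: rw; rewrite E => rw.
have := leq_trans rw (mxrankM_maxl _ _); have := rank_leq_col y.
by move=> h1 h2; have := leq_trans h2 h1.
Qed.

Lemma sesq_rank1 {n} (v u x y : 'cV[C]_n) (kap : C) :
  sesq v (kap *: (x *m adjm y)) u = kap * (dotc v x * dotc y u).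
Proof.
rewrite sesqE -scalemxAl -mulmxA dotcZr.
have -> : x *m (adjm y *m u) = dotc y u *: x.
  by apply/matrixP=> i j; rewrite (ord1 j) !mxE big_ord1 mulrC /dotc.
by rewrite dotcZr; ring.
Qed.

Lemma core2 {n k} (v u : 'I_k -> 'cV[C]_n) x r y s (kap : R) (al om : C) :
  (0 < n)%N -> dotc x x = 1 -> dotc r r = 1 -> dotc x r = 0 ->
  dotc y y = 1 -> dotc s s = 1 -> dotc y s = 0 ->
  0 < kap -> 0 < om -> al != 0 -> al * al^* + om ^+ 2 = 1 ->
  (forall j, dotc (v j) x * (al^* * dotc y (u j) + om * dotc s (u j)) +
             dotc (v j) r * (om * dotc y (u j) + - al * dotc s (u j)) = 0) ->
  ~ left_symmetric_rel (Vspace v u) (kap%:C%C *: (x *m adjm y)).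
Proof.
move=> n0 x1 r1 xr y1 s1 ys k0 om0 al0 hal HV.
rewrite -(mk2_E x r y s) => LS.
apply: (core v u (mk2 x r) (mk2 y s) kap al om n0 (mk2_iso x r x1 r1 xr) (mk2_iso y s y1 s1 ys) k0 om0 al0 hal (proj1 LS) _ LS).
by move=> j; rewrite sesq_mk2; apply: HV.
Qed.

Definition fam {n k} (x : 'cV[C]_n) (w : 'I_k -> 'cV[C]_n) (P : pred 'I_k)
  (o : option {j : 'I_k | P j}) : 'cV[C]_n :=
  match o with None => x | Some j => w (val j) end.

Lemma kernel_fam {n k} (x : 'cV[C]_n) (w : 'I_k -> 'cV[C]_n) (P : pred 'I_k) :
  (#|P| < n.-1)%N -> (1 < n)%N ->
  exists r, [/\ dotc r r = 1, dotc x r = 0 & forall j, P j -> dotc (w j) r = 0].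
Proof.
move=> cP n1.
have [|r [r1 hr]] := kernel_vec _ (fam x w P).
  rewrite card_option card_sig.
  have -> : #|[pred x0 | P x0]| = #|P| by apply: eq_card.
  by move: cP n1; move: #|P| => p; case: (n) => [|[|m]] //=; lia.
exists r; split => //; first exact: (hr None).
by move=> j Pj; apply: (hr (Some (exist _ j Pj))).
Qed.
End Cases.
Section Cases2.
Context {R : realType}.
Local Notation C := R[i].

Lemma case_std {n k} (v u : 'I_k -> 'cV[C]_n) x y (kap : R) a b :
  (k < n)%N -> (1 < n)%N -> dotc x x = 1 -> dotc y y = 1 -> 0 < kap ->
  (forall j, dotc (v j) x * dotc y (u j) = 0) -> a != b -> dotc y (u a) = 0 ->
  dotc (v b) x = 0 ->
  ~ left_symmetric_rel (Vspace v u) (kap%:C%C *: (x *m adjm y)).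
Proof.
move=> kn n1 x1 y1 kp hp ab ya vb.
have k0 : (0 < k)%N by apply: leq_ltn_trans (ltn_ord a).
pose Jr := [pred j | (j == b) || (dotc y (u j) != 0)].
have cJr : (#|Jr| < n.-1)%N.
  have : (#|Jr| <= #|predC1 a|)%N.
    apply: subset_leq_card; apply/fintype.subsetP => j; rewrite !inE => Hj.
    by apply/eqP => ja; move: Hj; rewrite ja (negbTE ab) ya eqxx.
  by rewrite cardC1 card_ord; move: kn k0; move: #|Jr| => p; lia.
have cJs : (#|predC Jr| < n.-1)%N.
  have : (#|predC Jr| <= #|predC1 b|)%N.
    apply: subset_leq_card; apply/fintype.subsetP => j; rewrite !inE => Hj.
    by apply/eqP => jb; move: Hj; rewrite jb eqxx.
  by rewrite cardC1 card_ord; move: kn k0; move: #|predC Jr| => p; lia.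
have [r [r1 xr hr]] := kernel_fam x v Jr cJr n1.
have [s [s1 ys hs]] := kernel_fam y u (predC Jr) cJs n1.
have c35 : (3%:R / 5%:R : C)^* = 3%:R / 5%:R by rewrite geC0_conj // divr_ge0 ?ler0n.
apply: (core2 v u x r y s kap (3%:R / 5%:R) (4%:R / 5%:R) (ltnW n1) x1 r1 xr y1 s1 ys kp).
- by rewrite divr_gt0 ?ltr0n.
- by rewrite mulf_neq0 ?invr_eq0 ?pnatr_eq0.
- by rewrite c35; field.
move=> j; case Jrj: (Jr j).
  have vr := hr j Jrj.
  have vx : dotc (v j) x = 0.
    move: Jrj; rewrite /Jr inE => /orP [/eqP -> // | nz].
    by have := hp j; move/eqP; rewrite mulf_eq0 (negbTE nz) orbF => /eqP.
  by rewrite vx vr !mul0r addr0.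
have us : dotc (u j) s = 0 by apply: hs; rewrite inE Jrj.
have yu : dotc y (u j) = 0.
  by move: Jrj; rewrite /Jr inE => /negbT; rewrite negb_or negbK => /andP [_ /eqP].
have su : dotc s (u j) = 0 by rewrite (dotcC (u j) s) us conjC0.
by rewrite yu su !mulr0 !addr0 !mulr0 addr0.
Qed.

Lemma case_T1 {n k} (v u : 'I_k -> 'cV[C]_n) x y (kap : R) :
  (k < n)%N -> (1 < n)%N -> dotc x x = 1 -> dotc y y = 1 -> 0 < kap ->
  (forall j, dotc (u j) (u j) = 1) -> (2 <= \rank (colmat u))%N ->
  (forall j, dotc (v j) x * dotc y (u j) = 0) -> (forall j, dotc y (u j) != 0) ->
  ~ left_symmetric_rel (Vspace v u) (kap%:C%C *: (x *m adjm y)).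
Proof.
move=> kn n1 x1 y1 kp u1 ru hp nz.
have vx : forall j, dotc (v j) x = 0.
  by move=> j; have := hp j; move/eqP; rewrite mulf_eq0 (negbTE (nz j)) orbF => /eqP.
have [j0 Hj0] := rank_not_parallel u y ru.
have [s [om [ys s1 om0 su hal]]] := gram_schmidt y (u j0) y1 (u1 j0) Hj0.
have k0 : (0 < k)%N by apply: leq_ltn_trans (ltn_ord j0).
have cP : (#|predC1 j0| < n.-1)%N by rewrite cardC1 card_ord; lia.
have [r [r1 xr hr]] := kernel_fam x v (predC1 j0) cP n1.
apply: (core2 v u x r y s kap (dotc y (u j0)) om (ltnW n1) x1 r1 xr y1 s1 ys kp om0 (nz j0) hal).
move=> j; rewrite vx mul0r add0r.
case: (eqVneq j j0) => [->|ne]; first by rewrite su mulNr (mulrC (dotc y (u j0))) subrr mulr0.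
by rewrite hr ?inE ?ne // mul0r.
Qed.

Lemma case_T2 {n k} (v u : 'I_k -> 'cV[C]_n) x y (kap : R) :
  (k < n)%N -> (1 < n)%N -> dotc x x = 1 -> dotc y y = 1 -> 0 < kap ->
  (forall j, dotc (v j) (v j) = 1) -> (2 <= \rank (colmat v))%N ->
  (forall j, dotc (v j) x * dotc y (u j) = 0) -> (forall j, dotc (v j) x != 0) ->
  ~ left_symmetric_rel (Vspace v u) (kap%:C%C *: (x *m adjm y)).
Proof.
move=> kn n1 x1 y1 kp v1 rv hp nz.
have yu : forall j, dotc y (u j) = 0.
  by move=> j; have := hp j; move/eqP; rewrite mulf_eq0 (negbTE (nz j)) /= => /eqP.
have [j0 Hj0] := rank_not_parallel v x rv.
have [t [om [xt t1 om0 tv hal]]] := gram_schmidt x (v j0) x1 (v1 j0) Hj0.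
have k0 : (0 < k)%N by apply: leq_ltn_trans (ltn_ord j0).
have cP : (#|predC1 j0| < n.-1)%N by rewrite cardC1 card_ord; lia.
have [r [r1 yr hr]] := kernel_fam y u (predC1 j0) cP n1.
have omc : om^* = om by rewrite geC0_conj // ltW.
apply: (core2 v u x t y r kap ((dotc x (v j0))^*) om (ltnW n1) x1 t1 xt y1 r1 yr kp om0).
- by rewrite conjC_eq0 (dotcC (v j0) x) conjC_eq0.
- by rewrite conjCK mulrC.
move=> j; rewrite yu !mulr0 !add0r.
case: (eqVneq j j0) => [->|ne].
  rewrite (dotcC x (v j0)) (dotcC t (v j0)) tv omc; ring.
by rewrite (dotcC (u j) r) hr ?inE ?ne // conjC0 !mulr0 addr0.
Qed.
End Cases2.
Theorem lemma3p4 (R : realType) (n k : nat) (v u : 'I_k -> 'cV[R[i]]_n) :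
  (2 <= n)%N -> (k <= n.-1)%N ->
  (forall j, vnorm (v j) = 1) -> (forall j, vnorm (u j) = 1) ->
  (2 <= \rank (colmat v))%N -> (2 <= \rank (colmat u))%N ->
  ~ (exists A : 'M[R[i]]_n,
       \rank A = 1%N /\ left_symmetric_rel (Vspace v u) A).
Proof.
move=> n2 kn hv hu rv ru [A [rA LS]].
have v1 : forall j, dotc (v j) (v j) = 1 by move=> j; rewrite -vnormE hv expr1n.
have u1 : forall j, dotc (u j) (u j) = 1 by move=> j; rewrite -vnormE hu expr1n.
have [x [y [kap [x1 y1 kp AE]]]] := rank1_decomp A rA.
rewrite AE in LS.
have kap0 : kap%:C%C != 0 :> R[i].
  by apply/eqP => /(congr1 (@complex.Re R)) /= /eqP; rewrite gt_eqF.
have hp : forall j, dotc (v j) x * dotc y (u j) = 0.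
  move=> j; have := (proj1 LS) j; rewrite sesq_rank1 => /eqP.
  by rewrite mulf_eq0 (negbTE kap0) /= => /eqP.
have k2 : (2 <= k)%N by apply: leq_trans rv (rank_leq_col _).
have kn' : (k < n)%N by lia.
have n1 : (1 < n)%N by [].
case: (boolP [exists j, dotc y (u j) == 0]) => [/existsP [a /eqP Ha] | /existsPn HP]; last first.
  exact: (case_T1 v u x y kap kn' n1 x1 y1 kp u1 ru hp HP LS).
case: (boolP [exists j, dotc (v j) x == 0]) => [/existsP [b /eqP Hb] | /existsPn HQ]; last first.
  exact: (case_T2 v u x y kap kn' n1 x1 y1 kp v1 rv hp HQ LS).
case: (eqVneq a b) => [eab|ab]; last exact: (case_std v u x y kap a b kn' n1 x1 y1 kp hp ab Ha Hb LS).
subst b.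
have [c ca] : exists c : 'I_k, c != a.
  case: (pickP (predC1 a)) => [c Hc|H]; first by exists c.
  have := cardC1 a; rewrite card_ord (eq_card0 H); lia.
case: (eqVneq (dotc y (u c)) 0) => [yc|yc].
  exact: (case_std v u x y kap c a kn' n1 x1 y1 kp hp ca yc Hb LS).
have vc : dotc (v c) x = 0.
  by have := hp c; move/eqP; rewrite mulf_eq0 (negbTE yc) orbF => /eqP.
have ac : a != c by rewrite eq_sym.
exact: (case_std v u x y kap a c kn' n1 x1 y1 kp hp ac Ha vc LS).
Qed.
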